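(* Let $(V,o)$ be a normal surface singularity of degree one (i.e. $Z^2=-1$) with $p_f(V,o)>0$, where $Z$ is the fundamental cycle on the minimal resolution. Assume that $Z$ is essentially irreducible. Then $$p_a(V,o)=\frac{p(p-1)m}{2}+1,$$ where $p=p_f(V,o)$ and $m$ is the length of the Yau sequence for $Z$.
   Context: Let $\pi\colon X\to V$ be the minimal resolution and $\pi^{-1}(o)=\bigcup_{i=1}^n E_i$ the irreducible components of the exceptional set. A cycle is $D=\sum d_iE_i$, $d_i\in\mathbb Z$; $D_1\le D_2$ means coefficientwise inequality, $D_1<D_2$ means $D_1\le D_2$, $D_1\neq D_2$. $K$ is the canonical divisor of $X$; for a cycle $D>0$, $p_a(D)=1+\frac12(D^2+D\cdot K)$. The fundamental cycle $Z$ is the smallest cycle $D>0$ with support $\pi^{-1}(o)$ with $D\cdot E_i\le0$ for all $i$; $p_f(V,o)=p_a(Z)$; the degree is $-Z^2$. The arithmetic genus is $p_a(V,o)=\max\{p_a(D)\mid D>0\text{ a cycle}\}$. ''$\mathcal O_D(-C)$ numerically trivial'' means $C\cdot E=0$ for every irreducible component $E\le D$. $Z_{min}$ is the unique minimal cycle $0<Z_{min}\le Z$ with $p_a(Z_{min})=p_a(Z)$. Yau sequence: for a cycle $D$ that is the fundamental cycle on its support with $Z_{min}\le D$, $p_a(D)=p_f(V,o)$ and $D\cdot E=0$ for all components $E\le Z_{min}$, the Tyurina component of $D$ is the unique maximal cycle $0<D'<D$ with $\mathcal O_{D'}(-D)$ numerically trivial and $p_a(D')=p_a(D)$. Set $D_1=Z$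 and $D_{i+1}=$ Tyurina component of $D_i$ as long as $D_i\cdot E=0$ for all components $E\le Z_{min}$, stopping at the first $D_m$ with $D_m\cdot Z_{min}<0$; $m$ is the length of the Yau sequence. A $(-2)$-curve is a smooth rational exceptional curve $E$ with $E^2=-2$. $Z$ is essentially irreducible if there is a component $A\le Z$ which is not a $(-2)$-curve such that, with $k$ the coefficient of $A$ in $Z$, either $Z=kA$ or all components of $Z-kA$ are $(-2)$-curves. *)

(* Defs.v *)
(* Numerical (intersection-lattice) model of the exceptional
   set of the minimal resolution of a normal surface singularity. *)
From HB Require Import structures.
From mathcomp Require Import all_boot all_order all_algebra.
Set Implicit Arguments. Unset Strict Implicit. Unset Printing Implicit Defensive.
Import Order.TTheory GRing.Theory Num.Theory.
Local Open Scope ring_scope.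

(* Data: n components E_0..E_{n-1}; M i j = E_i . E_j ; g i = p_a(E_i). *)

(* A cycle D = sum_i d_i E_i. *)
Definition ecycle (n : nat) := 'I_n -> int.

Definition Ecyc (n : nat) (j : 'I_n) : ecycle n := fun i => (i == j)%:Z.

Definition inter (n : nat) (M : 'M[int]_n) (D1 D2 : ecycle n) : int :=
  \sum_(i < n) \sum_(j < n) D1 i * M i j * D2 j.

(* K . E_i, by adjunction: 2 p_a(E_i) - 2 = E_i^2 + K.E_i. *)
Definition KE (n : nat) (M : 'M[int]_n) (g : 'I_n -> nat) (i : 'I_n) : int :=
  2 * (g i)%:Z - 2 - M i i.

Definition interK (n : nat) (M : 'M[int]_n) (g : 'I_n -> nat) (D : ecycle n) : int :=
  \sum_(i < n) D i * KE M g i.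

(* p_a(D) = 1 + (D^2 + D.K)/2 ; D^2 + D.K is always even, so the division
   is exact. *)
Definition pa (n : nat) (M : 'M[int]_n) (g : 'I_n -> nat) (D : ecycle n) : int :=
  1 + ((inter M D D + interK M g D) %/ 2)%Z.

Definition cle (n : nat) (D1 D2 : ecycle n) : Prop := forall i, D1 i <= D2 i.
Definition clt (n : nat) (D1 D2 : ecycle n) : Prop :=
  cle D1 D2 /\ exists i, D1 i != D2 i.

Definition czero (n : nat) : ecycle n := fun _ => 0.
Arguments czero n : clear implicits.

Definition in_supp (n : nat) (D : ecycle n) (i : 'I_n) : Prop := D i != 0.

Definition resolution_data (n : nat) (M : 'M[int]_n) (g : 'I_n -> nat) : Prop :=
  (0 < n)%N /\
  [/\ (forall i j, M i j = M j i),
      (forall i j, i != j -> 0 <= M i j),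
      (forall D : ecycle n, (exists i, D i != 0) -> inter M D D < 0),
      (* connected exceptional set *)
      (forall S : {set 'I_n}, S != set0 -> S != setT ->
         exists i j, [/\ i \in S, j \notin S & 0 < M i j]) &
      (* minimality: no smooth rational (-1)-curve *)
      (forall i, ~ (M i i = -1 /\ g i = 0%N))].

Definition is_fundamental_cycle (n : nat) (M : 'M[int]_n) (Z : ecycle n) : Prop :=
  let adm := fun D : ecycle n =>
    clt (czero n) D /\ (forall i, D i != 0) /\ (forall i, inter M D (Ecyc i) <= 0) in
  adm Z /\ (forall D, adm D -> cle Z D).

Definition is_arith_genus (n : nat) (M : 'M[int]_n) (g : 'I_n -> nat) (P : int) : Prop :=
  (exists D : ecycle n, clt (czero n) D /\ pa M g D = P) /\
  (forall D : ecycle n, clt (czero n) D -> pa M g D <= P).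

Definition is_Zmin (n : nat) (M : 'M[int]_n) (g : 'I_n -> nat) (Z Y : ecycle n) : Prop :=
  let P := fun Y : ecycle n => [/\ clt (czero n) Y, cle Y Z & pa M g Y = pa M g Z] in
  P Y /\ (forall Y', P Y' -> cle Y Y').

(* D' is the Tyurina component of D: the unique maximal cycle 0 < D' < D
   with O_{D'}(-D) numerically trivial and p_a(D') = p_a(D). *)
Definition is_tyurina_component (n : nat) (M : 'M[int]_n) (g : 'I_n -> nat)
    (D D' : ecycle n) : Prop :=
  let P := fun C : ecycle n =>
    [/\ clt (czero n) C, clt C D,
        (forall i, in_supp C i -> inter M D (Ecyc i) = 0) &
        pa M g C = pa M g D] in
  P D' /\ (forall C, P C -> cle C D').

Definition is_yau_sequence (n : nat) (M : 'M[int]_n) (g : 'I_n -> nat)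
    (Z Zmin : ecycle n) (Ds : nat -> ecycle n) (m : nat) : Prop :=
  [/\ (1 <= m)%N, Ds 1%N = Z,
      (forall k, (1 <= k < m)%N ->
         (forall i, in_supp Zmin i -> inter M (Ds k) (Ecyc i) = 0) /\
         is_tyurina_component M g (Ds k) (Ds k.+1)) &
      inter M (Ds m) Zmin < 0].

Definition minus2_curve (n : nat) (M : 'M[int]_n) (g : 'I_n -> nat) (i : 'I_n) : Prop :=
  g i = 0%N /\ M i i = -2.

Definition essentially_irreducible (n : nat) (M : 'M[int]_n) (g : 'I_n -> nat)
    (Z : ecycle n) : Prop :=
  exists a : 'I_n, [/\ in_supp Z a, ~ minus2_curve M g a &
    forall i, i != a -> in_supp Z i -> minus2_curve M g i].

(* Main.v *)
Require Import Defs.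
From mathcomp Require Import all_boot all_order all_algebra.
From mathcomp Require Import zify ring lra.
From Stdlib Require Import FunctionalExtensionality.
Import Order.TTheory GRing.Theory Num.Theory.
Local Open Scope ring_scope.
Set Implicit Arguments. Unset Strict Implicit. Unset Printing Implicit Defensive.

Section Basic.
Variables (n : nat) (M : 'M[int]_n) (g : 'I_n -> nat).
Hypothesis Msym : forall i j, M i j = M j i.

Definition dotE (D : ecycle n) (e : 'I_n) : int := \sum_(i < n) D i * M i e.
Definition lin (U X : ecycle n) (c : int) : ecycle n := fun i => U i - c * X i.

Lemma interE1 D e : inter M D (Ecyc e) = dotE D e.
Proof.
rewrite /inter /dotE; apply: eq_bigr => i _.
rewrite (bigD1 e) //= big1 ?addr0 /Ecyc ?eqxx ?mulr1 //.
by move=> j /negPf ->; rewrite mulr0.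
Qed.

Lemma inter_dot D1 D2 : inter M D1 D2 = \sum_(j < n) D2 j * dotE D1 j.
Proof.
rewrite /inter exchange_big; apply: eq_bigr => j _; rewrite /dotE mulr_sumr.
by apply: eq_bigr => i _; rewrite mulrC.
Qed.

Lemma inter_sym D1 D2 : inter M D1 D2 = inter M D2 D1.
Proof.
rewrite /inter exchange_big; apply: eq_bigr => i _; apply: eq_bigr => j _.
by rewrite Msym; ring.
Qed.

Lemma inter_linl U X c V : inter M (lin U X c) V = inter M U V - c * inter M X V.
Proof.
rewrite /inter mulr_sumr -sumrB; apply: eq_bigr => i _.
rewrite mulr_sumr -sumrB; apply: eq_bigr => j _; rewrite /lin; ring.
Qed.

Lemma inter_linr V U X c : inter M V (lin U X c) = inter M V U - c * inter M V X.
Proof. by rewrite inter_sym inter_linl !(inter_sym _ V). Qed.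

Lemma dotE_lin U X c e : dotE (lin U X c) e = dotE U e - c * dotE X e.
Proof. by rewrite -!interE1 inter_linl. Qed.

Lemma dotE_Ecyc f e : dotE (Ecyc f) e = M f e.
Proof.
rewrite /dotE (bigD1 f) //= big1 ?addr0 /Ecyc ?eqxx ?mul1r //.
by move=> j /negPf ->; rewrite mul0r.
Qed.

Lemma inter_czerol V : inter M (czero n) V = 0.
Proof. by rewrite /inter big1 // => i _; rewrite big1 // => j _; rewrite /czero !mul0r. Qed.
Lemma inter_czeror V : inter M V (czero n) = 0.
Proof. by rewrite inter_sym inter_czerol. Qed.
Lemma dotE_czero e : dotE (czero n) e = 0.
Proof. by rewrite -interE1 inter_czerol. Qed.

Lemma interK_lin U X c : interK M g (lin U X c) = interK M g U - c * interK M g X.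
Proof.
rewrite /interK mulr_sumr -sumrB; apply: eq_bigr => i _; rewrite /lin; ring.
Qed.

Lemma interK_Ecyc f : interK M g (Ecyc f) = KE M g f.
Proof.
rewrite /interK (bigD1 f) //= big1 ?addr0 /Ecyc ?eqxx ?mul1r //.
by move=> j /negPf ->; rewrite mul0r.
Qed.

Lemma inter_le0 (nd : forall D : ecycle n, (exists i, D i != 0) -> inter M D D < 0) D :
  inter M D D <= 0.
Proof.
case: (boolP [exists i, D i != 0]) => [/existsP H|/existsPn H].
  by apply/ltW/nd.
rewrite /inter big1 // => i _; move: (H i); rewrite negbK => /eqP ->.
by rewrite big1 // => j _; rewrite !mul0r.
Qed.

Lemma even_pred_mul (x : int) : (2 %| x * (x - 1))%Z.
Proof.
have r0 : 0 <= (x %% 2)%Z by apply: modz_ge0.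
have r1 : (x %% 2)%Z < 2 by apply: ltz_pmod.
rewrite [x](divz_eq x 2).
move: r0 r1; move: (x %% 2)%Z (x %/ 2)%Z => r q r0 r1.
apply/dvdzP.
have [->|r1'] := eqVneq r 0.
  by exists (q * (2 * q - 1)); ring.
have -> : r = 1 by lia.
by exists (q * (2 * q + 1)); ring.
Qed.

Lemma sum_sym_split (x : 'I_n -> 'I_n -> int) :
  (forall i j, x i j = x j i) ->
  \sum_(i < n) \sum_(j < n) x i j =
    \sum_(i < n) x i i + 2 * \sum_(i < n) \sum_(j < n) (j < i)%N%:Z * x i j.
Proof.
move=> xs.
have E : forall i j, x i j = (j < i)%N%:Z * x i j + (i == j)%:Z * x i j + (i < j)%N%:Z * x i j.
  move=> i j; case: (ltngtP i j) => [h|h|/val_inj h].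
  - have -> : (i == j) = false by apply/eqP => E; rewrite E ltnn in h.
    rewrite /=; ring.
  - have -> : (i == j) = false by apply/eqP => E; rewrite E ltnn in h.
    rewrite /=; ring.
  - by rewrite h eqxx /=; ring.
transitivity (\sum_(i < n) \sum_(j < n) ((j < i)%N%:Z * x i j + (i == j)%:Z * x i j + (i < j)%N%:Z * x i j)).
  by apply: eq_bigr => i _; apply: eq_bigr => j _; apply: E.
rewrite [LHS](eq_bigr (fun i : 'I_n => \sum_(j < n) (j < i)%N%:Z * x i j + \sum_(j<n) (i == j)%:Z * x i j + \sum_(j<n) (i < j)%N%:Z * x i j)); last first.
  by move=> i _; rewrite -!big_split.
rewrite !big_split /=.
have D : \sum_(i < n) \sum_(j < n) (i == j)%:Z * x i j = \sum_(i < n) x i i.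
  apply: eq_bigr => i _; rewrite (bigD1 i) //= eqxx mul1r big1 ?addr0 //.
  by move=> j /negPf; rewrite eq_sym => ->; rewrite mul0r.
have U : \sum_(i < n) \sum_(j < n) (i < j)%N%:Z * x i j = \sum_(i < n) \sum_(j < n) (j < i)%N%:Z * x i j.
  rewrite exchange_big; apply: eq_bigr => i _; apply: eq_bigr => j _; by rewrite xs.
rewrite D U; ring.
Qed.

Lemma parity D : (2 %| inter M D D + interK M g D)%Z.
Proof.
rewrite /inter sum_sym_split; last by move=> i j; rewrite Msym; ring.
rewrite /interK.
set T := (X in 2 * X).
rewrite -addrA addrC -addrA -big_split /=.
apply: rpredD; first by apply/dvdzP; exists T; rewrite mulrC.
apply: rpred_sum => i _.
have -> : D i * KE M g i + D i * M i i * D i = 2 * (D i * (g i)%:Z) - 2 * D i + M i i * (D i * (D i - 1)).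
  rewrite /KE; ring.
apply: rpredD; first apply: rpredB.
- by apply/dvdzP; eexists; rewrite mulrC.
- by apply/dvdzP; eexists; rewrite mulrC.
- by apply: dvdz_mull; apply: even_pred_mul.
Qed.

End Basic.

Lemma unique_neg1 (n : nat) (F : 'I_n -> int) :
  (forall e, F e <= 0) -> \sum_(e < n) F e = -1 ->
  exists f, F f = -1 /\ forall e, e != f -> F e = 0.
Proof.
move=> Fle Fs.
case: (boolP [exists f, F f != 0]) => [/existsP [f Hf]|/existsPn H]; last first.
  by move: Fs; rewrite big1 // => e _; move: (H e); rewrite negbK => /eqP.
move: Fs; rewrite (bigD1 f) //=; set s := \sum_(i < n | i != f) F i => Fs.
have Hrest : 0 <= - s.
  by rewrite /s -sumrN; apply: sumr_ge0 => e _; rewrite oppr_ge0.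
have Ff : F f = -1.
  move: (Fle f) Hf Hrest Fs; lia.
exists f; split => // e ef.
have H0 : \sum_(i < n | i != f) - F i = 0.
  rewrite sumrN -/s; move: Fs; rewrite Ff; lia.
have P0 : forall i, i != f -> 0 <= - F i by move=> i _; rewrite oppr_ge0.
have := psumr_eq0P P0 H0 ef.
by move=> h; lia.
Qed.

Lemma prod_m1 (x y : int) : 0 <= x -> y <= 0 -> x * y = -1 -> x = 1 /\ y = -1.
Proof.
move=> x0 y0 xy.
have yn : y != 0 by apply/eqP => y0'; move: xy; rewrite y0' mulr0.
have xn : x != 0 by apply/eqP => x0'; move: xy; rewrite x0' mul0r.
have x1 : 1 <= x by lia.
have y1 : y <= -1 by lia.
have : x * (y + 1) <= 0 by apply: mulr_ge0_le0; lia.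
move=> h; split; nia.
Qed.

Section Main.
Variables (n : nat) (M : 'M[int]_n) (g : 'I_n -> nat) (Z Zmin : ecycle n)
  (Ds : nat -> ecycle n) (m : nat) (a : 'I_n).
Hypothesis Msym : forall i j, M i j = M j i.
Hypothesis Moff : forall i j, i != j -> 0 <= M i j.
Hypothesis Mnd : forall D : ecycle n, (exists i, D i != 0) -> inter M D D < 0.
Hypothesis Zpos : forall i, 0 <= Z i.
Hypothesis Znz : forall i, Z i != 0.
Hypothesis ZE : forall i, inter M Z (Ecyc i) <= 0.
Hypothesis HZZ : inter M Z Z = -1.
Hypothesis Hp : 0 < pa M g Z.
Hypothesis Hm2 : forall i, i != a -> minus2_curve M g i.
Hypothesis HZmin : is_Zmin M g Z Zmin.
Hypothesis HY : is_yau_sequence M g Z Zmin Ds m.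

Local Notation kap := (KE M g a).

Lemma interK_a D : interK M g D = D a * kap.
Proof.
rewrite /interK (bigD1 a) //= big1 ?addr0 // => i /Hm2 [gi Mi].
by rewrite /KE gi Mi; rewrite mulr0 // ; lia.
Qed.

Lemma KE_m2 f : minus2_curve M g f -> KE M g f = 0.
Proof. by case=> gi Mi; rewrite /KE gi Mi; lia. Qed.

Lemma Zmin_ge0 i : 0 <= Zmin i.
Proof. by case: HZmin => [[[+ _] _ _] _]; apply. Qed.

Lemma Zmin_a : Zmin a != 0.
Proof.
apply/negP => /eqP Za.
case: HZmin => [[[_ [i Hi]] _ Hpa] _].
have nd : inter M Zmin Zmin < 0 by apply: Mnd; exists i; rewrite eq_sym.
move: Hpa; rewrite /pa interK_a Za mul0r addr0.
have : (inter M Zmin Zmin %/ 2 < 0)%Z by rewrite ltz_divLR.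
move: Hp; rewrite /pa; lia.
Qed.

Fixpoint Psum (t : nat) : ecycle n :=
  if t is t'.+1 then lin (Psum t') (Ds t'.+1) (-1) else czero n.

Definition Inv j := [/\ (forall e, 0 <= Ds j e), (forall e, Ds j e <= Z e),
  Ds j a = Z a, inter M (Ds j) (Ds j) = -1 & interK M g (Ds j) = interK M g Z /\
  exists f, [/\ Ds j f = 1, dotE M (Ds j) f = -1,
     (forall e, e != f -> Ds j e != 0 -> dotE M (Ds j) e = 0),
     (forall e, Ds j e = 0 -> dotE M (Ds j) e = M f e) &
     (forall e, dotE M (Psum j) e = - (e == f)%:Z)]].

Lemma sub_inter D f : dotE M D f = -1 -> M f f = -2 ->
  inter M (lin D (Ecyc f) 1) (lin D (Ecyc f) 1) = inter M D D.
Proof.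
move=> Df Mf.
rewrite inter_linl !(inter_linr Msym) (inter_sym Msym (Ecyc f)) !interE1 dotE_Ecyc Df Mf.
ring.
Qed.

Lemma sub_interK D f : minus2_curve M g f ->
  interK M g (lin D (Ecyc f) 1) = interK M g D.
Proof. by move=> m2; rewrite interK_lin interK_Ecyc KE_m2 // mulr0 subr0. Qed.

Lemma Inv1 : Inv 1.
Proof.
case: HY => _ D1 _ _; rewrite /Inv D1.
split => //; split => //.
have [f [Ff Fo]] : exists f, Z f * dotE M Z f = -1 /\ forall e, e != f -> Z e * dotE M Z e = 0.
  apply: unique_neg1; last by rewrite -inter_dot.
  by move=> e; apply: mulr_ge0_le0 => //; rewrite -interE1.
have ZEf : dotE M Z f <= 0 by rewrite -interE1.
have [Zf Df] := prod_m1 (Zpos f) ZEf Ff.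
exists f; split => //.
- move=> e ef Ze; have := Fo e ef; move/eqP; rewrite mulf_eq0 (negPf Ze) /=.
  by move/eqP.
- by move=> e Ze; move: (Znz e); rewrite Ze.
- move=> e /=; rewrite dotE_lin dotE_czero.
  have [->|ef] := eqVneq e f; first by rewrite D1 Df /=; lia.
  rewrite D1; have := Fo e ef; move/eqP; rewrite mulf_eq0 (negPf (Znz e)) /=.
  by move/eqP ->; rewrite /=; lia.
Qed.

Lemma dotE_lower D e f h : (forall i, 0 <= D i) -> D e = 0 -> f != h ->
  D f * M f e + D h * M h e <= dotE M D e.
Proof.
move=> D0 De fh.
have T : forall i, 0 <= D i * M i e.
  move=> i; have [->|ie] := eqVneq i e; first by rewrite De mul0r.
  by apply: mulr_ge0 => //; apply: Moff.
rewrite /dotE (bigD1 f) //= (bigD1 h) /=; last by rewrite eq_sym.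
rewrite addrA lerDl; apply: sumr_ge0 => i _; exact: T.
Qed.

Lemma Inv_step j : (1 <= j < m)%N -> Inv j ->
  (forall e, Ds j.+1 e <= Ds j e) /\ Inv j.+1.
Proof.
move=> jm [D0 DZ Da DD [DK [f [Df dDf dDo dDz dP]]]].
case: HY => _ _ /(_ j jm) [Hsupp [[Pc1 Pc2 Pc3 Pc4] Hmax]] _.
have dDa : dotE M (Ds j) a = 0 by rewrite -interE1; apply: Hsupp; apply: Zmin_a.
have fa : f != a by apply/eqP => fa; move: dDf; rewrite fa dDa.
have [gf Mff] := Hm2 fa.
set C := lin (Ds j) (Ecyc f) 1.
have Ce : forall e, C e = Ds j e - (e == f)%:Z by move=> e; rewrite /C /lin /Ecyc mul1r.
have Cf : C f = 0 by rewrite Ce Df eqxx /=; lia.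
have C0 : forall e, 0 <= C e.
  move=> e; rewrite Ce; have [->|ef] := eqVneq e f; first by rewrite Df /=; lia.
  by rewrite /= subr0.
have Cle : forall e, C e <= Ds j e by move=> e; rewrite Ce; case: (e == f) => /=; lia.
have Cne : forall e, e != f -> C e = Ds j e by move=> e /negPf ef; rewrite Ce ef /= subr0.
have Ca : C a = Ds j a by rewrite Cne // eq_sym.
have CC : inter M C C = -1 by rewrite sub_inter.
have CK : interK M g C = interK M g (Ds j) by rewrite sub_interK //; apply: Hm2.
have dC : forall e, dotE M C e = dotE M (Ds j) e - M f e.
  by move=> e; rewrite dotE_lin dotE_Ecyc mul1r.
have Cnz : forall e, C e != 0 -> [/\ e != f, Ds j e != 0 & dotE M C e = - M f e].
  move=> e Ce0.
  have ef : e != f by apply/eqP => ef; move: Ce0; rewrite ef Cf eqxx.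
  have De : Ds j e != 0 by move: Ce0; rewrite Cne //.
  by split => //; rewrite dC dDo // sub0r.
have PC : [/\ clt (czero n) C, clt C (Ds j),
        (forall i, in_supp C i -> inter M (Ds j) (Ecyc i) = 0) &
        pa M g C = pa M g (Ds j)].
  split.
  - split; first exact: C0.
    by exists a; rewrite Ca Da /czero eq_sym; exact: Znz.
  - by split; [exact: Cle | exists f; rewrite Cf Df].
  - by move=> i /Cnz [iF Di _]; rewrite interE1; apply: dDo.
  - by rewrite /pa CC DD CK.
have CleD := Hmax C PC.
have Dsf : Ds j.+1 f = 0.
  apply/eqP; apply: contraT => H.
  by move: (Pc3 f H); rewrite interE1 dDf.
have HD : Ds j.+1 = C.
  apply: functional_extensionality => e; apply/eqP; rewrite eq_le CleD andbT.
  have [->|ef] := eqVneq e f; first by rewrite Dsf Cf.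
  by rewrite Cne //; case: Pc2 => + _; apply.
split; first by move=> e; rewrite HD.
have [f2 [F2 F2o]] : exists f2, C f2 * dotE M C f2 = -1 /\
    forall e, e != f2 -> C e * dotE M C e = 0.
  apply: unique_neg1; last by rewrite -inter_dot.
  move=> e; have [->|Ce0] := eqVneq (C e) 0; first by rewrite mul0r.
  have [ef De ->] := Cnz e Ce0.
  by apply: mulr_ge0_le0 => //; rewrite oppr_le0; apply: Moff; rewrite eq_sym.
have Cf2nz : C f2 != 0 by apply/eqP => h; move: F2; rewrite h mul0r.
have [f2f Df2 dCf2] := Cnz f2 Cf2nz.
have [Cf2 dCf2'] : C f2 = 1 /\ dotE M C f2 = -1.
  apply: prod_m1 => //; rewrite dCf2 oppr_le0; apply: Moff; by rewrite eq_sym.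
have Mff2 : M f f2 = 1 by move: dCf2'; rewrite dCf2; lia.
have dCo : forall e, e != f2 -> C e != 0 -> dotE M C e = 0.
  move=> e ef2 Ce0; have := F2o e ef2; move/eqP; rewrite mulf_eq0 (negPf Ce0) /=.
  by move/eqP.
have dCz : forall e, C e = 0 -> dotE M C e = M f2 e.
  move=> e Ce0; have [->|ef] := eqVneq e f.
    by rewrite dC dDf Mff Msym Mff2; lia.
  have Dje : Ds j e = 0 by rewrite -Cne.
  have H := dotE_lower D0 Dje f2f.
  rewrite dDz // Df -Cne // Cf2 !mul1r in H.
  have e2 : f2 != e by apply/eqP => h; move: Cf2; rewrite h Ce0.
  have M0 := Moff e2.
  rewrite dC dDz //; lia.
rewrite /Inv HD; split => //.
- by move=> e; apply: le_trans (Cle e) (DZ e).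
- by rewrite Ca.
split; first by rewrite CK.
exists f2; split => //.
move=> e /=; rewrite HD dotE_lin dP.
have [->|ef] := eqVneq e f.
  by rewrite eq_sym (negPf f2f) dC dDf Mff /=; lia.
have [->|ef2] := eqVneq e f2; first by rewrite dCf2' /=; lia.
have [Ce0|Ce0] := eqVneq (C e) 0.
  rewrite dCz //.
  have Dje : Ds j e = 0 by rewrite -Cne.
  have h := dCz e Ce0; rewrite dC dDz // in h; rewrite /=; lia.
by rewrite dCo //=; lia.
Qed.

Lemma Inv_all j : (1 <= j <= m)%N -> Inv j.
Proof.
elim: j => [//|j IH] /andP [_ jm].
case: j IH jm => [_ _|j IH jm]; first exact: Inv1.
have jm' : (1 <= j.+1 < m)%N by apply/andP; split.
have jm'' : (1 <= j.+1 <= m)%N by apply/andP; split => //; apply: ltnW.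
by case: (Inv_step jm' (IH jm'')).
Qed.

Lemma mono j : (1 <= j < m)%N -> forall e, Ds j.+1 e <= Ds j e.
Proof.
move=> jm; have := Inv_step jm; case/(_ (Inv_all _)) => //.
by case/andP: jm => -> /ltnW ->.
Qed.

Lemma Ds_ge0 j e : (1 <= j <= m)%N -> 0 <= Ds j e.
Proof. by move=> /Inv_all [+ _ _ _ _]; apply. Qed.

Lemma chain i l : (1 <= i)%N -> (i < l <= m)%N -> forall e, Ds l e <= Ds i.+1 e.
Proof.
move=> i1; elim: l => [//|l IH] /andP [il lm] e.
rewrite leq_eqVlt in il; case/orP: il => [/eqP <-//|il].
apply: le_trans (mono _ e) _.
  by apply/andP; split; lia.
by apply: IH; apply/andP; split; lia.
Qed.

Lemma orth i l : (1 <= i)%N -> (i < l <= m)%N -> inter M (Ds i) (Ds l) = 0.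
Proof.
move=> i1 ilm; case/andP: (ilm) => il lm.
have im : (1 <= i < m)%N by rewrite i1 (leq_trans il lm).
case: HY => _ _ /(_ i im) [_ [[_ _ Pc3 _] _]] _.
rewrite inter_dot big1 // => e _.
have [->|le] := eqVneq (Ds l e) 0; first by rewrite mul0r.
have : Ds i.+1 e != 0.
  have h1 := chain i1 ilm e; have h0 := Ds_ge0 e (_ : (1 <= l <= m)%N).
  rewrite lm (leq_trans i1 (ltnW il)) in h0; move: (h0 isT) h1 le; lia.
by move/Pc3; rewrite interE1 => ->; rewrite mulr0.
Qed.

Lemma orth2 i l : (1 <= i <= m)%N -> (1 <= l <= m)%N -> i != l ->
  inter M (Ds i) (Ds l) = 0.
Proof.
move=> /andP [i1 im] /andP [l1 lm] H; have [il|li|e] := ltngtP i l; last by rewrite e eqxx in H.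
- by apply: orth; rewrite ?il.
- by rewrite inter_sym //; apply: orth; rewrite ?li.
Qed.

Lemma DsDs l : (1 <= l <= m)%N -> inter M (Ds l) (Ds l) = -1.
Proof. by move=> /Inv_all [_ _ _ +]. Qed.

Fixpoint Dt (D : ecycle n) (t : nat) : ecycle n :=
  if t is t'.+1 then lin (Dt D t') (Ds t'.+1) (- inter M D (Ds t'.+1)) else D.

Lemma Bessel_a D t : (t <= m)%N -> forall l, (t < l <= m)%N ->
  inter M (Dt D t) (Ds l) = inter M D (Ds l).
Proof.
elim: t => [//|t IH] tm l /andP [tl lm] /=.
rewrite inter_linl IH; last (apply/andP; split; lia); last lia.
rewrite orth2 ?mulr0 ?subr0 //.
all: try (by apply/andP; split; lia).
all: by apply/eqP => h; rewrite h ltnn in tl.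
Qed.

Lemma Bessel_b D t : (t <= m)%N ->
  inter M (Dt D t) (Dt D t) = inter M D D + \sum_(j < t) (inter M D (Ds j.+1)) ^+ 2.
Proof.
elim: t => [_|t IH tm]; first by rewrite big_ord0 addr0.
rewrite big_ord_recr /= inter_linl !(inter_linr Msym) (inter_sym Msym (Ds t.+1)).
rewrite IH; last lia.
rewrite Bessel_a; last (apply/andP; split; lia); last lia.
rewrite DsDs; last (apply/andP; split; lia).
ring.
Qed.

Lemma Bessel D : inter M D D + \sum_(j < m) (inter M D (Ds j.+1)) ^+ 2 <= 0.
Proof. by rewrite -Bessel_b //; apply: inter_le0. Qed.

Lemma inter_Psum D t : inter M D (Psum t) = \sum_(j < t) inter M D (Ds j.+1).
Proof.
elim: t => [|t IH]; first by rewrite big_ord0 /= inter_czeror.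
by rewrite big_ord_recr /= (inter_linr Msym) IH; ring.
Qed.

Lemma Psum_a t : (t <= m)%N -> Psum t a = t%:Z * Z a.
Proof.
elim: t => [_|t IH tm] /=; first by rewrite /czero mul0r.
rewrite /lin IH ?(ltnW tm) //.
have h : (1 <= t.+1 <= m)%N by apply/andP; split; lia.
have [_ _ -> _ _] := Inv_all h.
rewrite -[t.+1]addn1 PoszD; ring.
Qed.

Lemma Psum_ge0 t e : (t <= m)%N -> 0 <= Psum t e.
Proof.
elim: t => [_|t IH tm] /=; first by rewrite /czero.
rewrite /lin; have := IH (ltnW tm); have := @Ds_ge0 t.+1 e.
have h : (1 <= t.+1 <= m)%N by apply/andP; split; lia.
move=> /(_ h); lia.
Qed.

Lemma sum_nat_const (x : int) : \sum_(j < m) x = x * m%:Z.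
Proof. by rewrite sumr_const card_ord pmulrn mulrzz. Qed.

Lemma m_ge1 : (1 <= m)%N.
Proof. by case: HY. Qed.

Lemma fm_a : forall e, dotE M (Psum m) e = - (e == a)%:Z.
Proof.
have m1 : (1 <= m <= m)%N by rewrite m_ge1 leqnn.
have [D0 DZ Da DD [DK [f [Df dDf dDo dDz dP]]]] := Inv_all m1.
suff fa : f = a by rewrite -fa.
apply/eqP; apply: contraT => fa.
have [gf Mff] := Hm2 fa.
set C := lin (Ds m) (Ecyc f) 1.
have Ce : forall e, C e = Ds m e - (e == f)%:Z by move=> e; rewrite /C /lin /Ecyc mul1r.
have Cf : C f = 0 by rewrite Ce Df eqxx /=; lia.
have Cne : forall e, e != f -> C e = Ds m e by move=> e /negPf ef; rewrite Ce ef /= subr0.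
have C0 : forall e, 0 <= C e.
  move=> e; have [->|ef] := eqVneq e f; first by rewrite Cf.
  by rewrite Cne.
have CZ : forall e, C e <= Z e.
  move=> e; apply: le_trans (DZ e); rewrite Ce; case: (e == f) => /=; lia.
have Ca : C a = Z a by rewrite Cne ?Da // eq_sym.
have PC : [/\ clt (czero n) C, cle C Z & pa M g C = pa M g Z].
  split => //.
  - split; first exact: C0.
    by exists a; rewrite Ca /czero eq_sym; exact: Znz.
  - by rewrite /pa sub_inter // sub_interK ?DD ?DK ?HZZ //; apply: Hm2.
case: HZmin => _ /(_ C PC) Hle.
have Zf : Zmin f = 0.
  by apply/eqP; rewrite eq_le Zmin_ge0 andbT -Cf; apply: Hle.
case: HY => _ _ _ Hlt.
suff : 0 <= inter M (Ds m) Zmin by rewrite leNgt Hlt.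
rewrite inter_dot; apply: sumr_ge0 => e _.
have [->|ef] := eqVneq e f; first by rewrite Zf mul0r.
have [Dz|Dnz] := eqVneq (Ds m e) 0.
  rewrite dDz //; apply: mulr_ge0; first exact: Zmin_ge0.
  by apply: Moff; rewrite eq_sym.
by rewrite dDo // mulr0.
Qed.

Lemma interS X : inter M (Psum m) X = - X a.
Proof.
rewrite inter_dot (bigD1 a) //= fm_a eqxx big1 ?addr0; first by rewrite /=; lia.
by move=> e /negPf ea; rewrite fm_a ea /= oppr0 mulr0.
Qed.

Lemma Za1 : Z a = 1.
Proof.
have := Bessel (Psum m).
rewrite interS Psum_a //.
rewrite (eq_bigr (fun _ => Z a ^+ 2)); last first.
  move=> j _; rewrite interS.
  have h : (1 <= j.+1 <= m)%N by apply/andP; split => //; exact: ltn_ord.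
  by have [_ _ -> _ _] := Inv_all h; rewrite sqrrN.
rewrite sum_nat_const => H.
have Z0 := Zpos a; have Z1 := Znz a; have m1 := m_ge1.
have m1' : 1 <= m%:Z by lia.
nia.
Qed.

Lemma kapE : kap = 2 * pa M g Z - 1.
Proof.
have h := parity g Msym Z.
rewrite HZZ interK_a Za1 mul1r in h.
have := divzK h; rewrite /pa HZZ interK_a Za1 mul1r; lia.
Qed.

Lemma main_result :
  is_arith_genus M g (((pa M g Z * (pa M g Z - 1) * m%:Z) %/ 2)%Z + 1).
Proof.
set p := pa M g Z.
have hk := kapE; rewrite -/p in hk.
have Sa : Psum m a = m%:Z by rewrite Psum_a // Za1 mulr1.
split.
- exists (lin (czero n) (Psum m) (- p)).
  split.
  + split.
    * move=> i; rewrite /lin /czero; have := Psum_ge0 i (leqnn m).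
      move: Hp; rewrite -/p; nia.
    * exists a; rewrite /lin /czero Sa; have := m_ge1; move: Hp; rewrite -/p.
      move=> h1 h2; apply/eqP => h3; nia.
  + rewrite /pa interK_a inter_linl inter_czerol !(inter_linr Msym) (inter_czeror Msym).
    have E := interS (Psum m); rewrite E.
    rewrite /lin /czero Sa hk.
    rewrite addrC; congr (_ + _); congr (divz _ _); ring.
- move=> D _.
  have SD : \sum_(j < m) inter M D (Ds j.+1) = - D a.
    by rewrite -inter_Psum (inter_sym Msym) interS.
  set c := fun j : 'I_m => inter M D (Ds j.+1).
  have B : inter M D D + \sum_(j < m) c j ^+ 2 <= 0 := Bessel D.
  have T : \sum_(j < m) (- (c j) ^+ 2 - c j * kap) <= \sum_(j < m) (p * (p - 1)).
    apply: ler_sum => j _; rewrite hk expr2.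
    have : 0 <= (c j + p) * (c j + p - 1).
      case: (lerP 1 (c j + p)) => h.
        by apply: mulr_ge0; lia.
      by apply: mulr_le0; lia.
    nia.
  rewrite sum_nat_const sumrB sumrN -mulr_suml in T.
  have Hn : inter M D D + interK M g D <= p * (p - 1) * m%:Z.
    rewrite interK_a.
    have -> : D a = - \sum_(j < m) c j by rewrite SD opprK.
    move: B T; set Y := \sum_(j < m) c j ^+ 2; set X := \sum_(j < m) c j; lia.
  have := lez_pdiv2r (_ : 0 <= 2) Hn; rewrite /pa; lia.
Qed.

End Main.

Theorem theorem3p11 (n : nat) (M : 'M[int]_n) (g : 'I_n -> nat)
    (Z Zmin : ecycle n) (Ds : nat -> ecycle n) (m : nat) :
  resolution_data M g ->
  is_fundamental_cycle M Z ->
  inter M Z Z = -1 ->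
  0 < pa M g Z ->
  essentially_irreducible M g Z ->
  is_Zmin M g Z Zmin ->
  is_yau_sequence M g Z Zmin Ds m ->
  is_arith_genus M g
    (((pa M g Z * (pa M g Z - 1) * m%:Z) %/ 2)%Z + 1).
Proof.
move=> [_ [Msym Moff Mnd _ _]] HZ HZZ Hp [a [_ _ Hm2']] HZmin HY.
case: HZ => [[[Z0 _] [Znz ZE]] _].
have Hm2 : forall i, i != a -> minus2_curve M g i.
  by move=> i ia; apply: Hm2' => //; apply: Znz.
exact: (main_result Msym Moff Mnd Z0 Znz ZE HZZ Hp Hm2 HZmin HY).
Qed.
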